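(* Let $\theta_1,\theta_2\in(0,\pi/2)$ satisfy $\theta_1\cot\theta_1=(\pi-\theta_2)\cot\theta_2$. Then $$\frac{\theta_1}{\sin\theta_1}+\cos\theta_1>\frac{\pi-\theta_2}{\sin\theta_2}-\cos\theta_2.$$ *)

(* Defs.v *)
From Stdlib Require Import Reals.

(* Main.v *)
Require Import Defs.
From Stdlib Require Import Reals.
From Stdlib Require Import Lra.
Open Scope R_scope.

Lemma phi_dec x y : 0 < x -> x < y -> y < PI/2 ->
  y * (cos y / sin y) < x * (cos x / sin x).
Proof.
  intros Hx Hxy Hy.
  assert (PI2 : PI/2 < PI) by (pose proof PI_RGT_0; lra).
  destruct (MVT_cor2 (fun t => t * (cos t / sin t))
     (fun c => ((1 * cos c + c * - sin c) * sin c - cos c * (c * cos c)) / (sin c)²) x y Hxy)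
    as [c [Hc Hcb]].
  - intros c Hc.
    assert (Hs : 0 < sin c) by (apply sin_gt_0; lra).
    assert (D : derivable_pt_lim ((id * cos) / sin)%F c
       (((1 * cos c + id c * - sin c) * sin c - cos c * ((id * cos)%F c)) / (sin c)²)).
    { apply derivable_pt_lim_div.
      - apply derivable_pt_lim_mult. apply derivable_pt_lim_id. apply derivable_pt_lim_cos.
      - apply derivable_pt_lim_sin.
      - lra. }
    unfold id, mult_fct in D.
    eapply derivable_pt_lim_ext; [| exact D].
    intro t; unfold div_fct, mult_fct, id. unfold Rdiv. ring.
  - assert (Hs : 0 < sin c) by (apply sin_gt_0; lra).
    assert (Hco : 0 < cos c) by (apply cos_gt_0; lra).
    assert (Hc1 : cos c <= 1) by apply COS_bound.
    assert (Hsx : sin c < c) by (apply sin_lt_x; lra).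
    assert (Hsq := sin2_cos2 c).
    assert (N : (1 * cos c + c * - sin c) * sin c - cos c * (c * cos c) < 0).
    { replace ((1 * cos c + c * - sin c) * sin c - cos c * (c * cos c))
        with (sin c * cos c - c * (sin c ^ 2 + cos c ^ 2)) by ring.
      unfold Rsqr in Hsq. replace (sin c ^ 2 + cos c ^ 2) with 1 by (rewrite <- Hsq; ring).
      nra. }
    assert (Q : ((1 * cos c + c * - sin c) * sin c - cos c * (c * cos c)) / (sin c)² < 0).
    { unfold Rdiv. apply Rmult_neg_pos; [exact N|]. apply Rinv_0_lt_compat.
      unfold Rsqr; nra. }
    nra.
Qed.

Lemma g_pos x : 0 < x -> x < PI/2 -> x * cos x < sin x.
Proof.
  intros Hx Hx2.
  assert (PI2 : PI/2 < PI) by (pose proof PI_RGT_0; lra).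
  destruct (MVT_cor2 (sin - id * cos)%F
     (fun c => cos c - (1 * cos c + id c * - sin c)) 0 x Hx) as [c [Hc Hcb]].
  - intros c Hc. apply derivable_pt_lim_minus. apply derivable_pt_lim_sin.
    apply derivable_pt_lim_mult. apply derivable_pt_lim_id. apply derivable_pt_lim_cos.
  - unfold minus_fct, mult_fct, id in Hc. rewrite sin_0, cos_0 in Hc.
    assert (Hs : 0 < sin c) by (apply sin_gt_0; lra).
    assert (0 < c * sin c * x) by (apply Rmult_lt_0_compat; [apply Rmult_lt_0_compat|]; lra).
    replace ((cos c - (1 * cos c + c * - sin c)) * (x - 0)) with (c * sin c * x) in Hc by ring.
    lra.
Qed.

Lemma E_max a t k : 0 < a < PI/2 -> 0 < t < PI/2 -> k = a * (cos a / sin a) ->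
  t * sin t + (1 + k) * cos t <= a * sin a + (1 + k) * cos a.
Proof.
  intros Ha Ht Hk.
  assert (PI2 : PI/2 < PI) by (pose proof PI_RGT_0; lra).
  assert (D : forall c, derivable_pt_lim (fun t => t * sin t + (1 + k) * cos t) c
                 (c * cos c - k * sin c)).
  { intro c.
    assert (D : derivable_pt_lim (id * sin + fct_cte (1 + k) * cos)%F c
       ((1 * sin c + id c * cos c) + (0 * cos c + fct_cte (1+k) c * - sin c))).
    { apply derivable_pt_lim_plus; apply derivable_pt_lim_mult.
      apply derivable_pt_lim_id. apply derivable_pt_lim_sin.
      apply derivable_pt_lim_const. apply derivable_pt_lim_cos. }
    unfold id, fct_cte in D.
    eapply derivable_pt_lim_ext; [| replace (c * cos c - k * sin c) with
       (1 * sin c + c * cos c + (0 * cos c + (1 + k) * - sin c)) by ring; exact D].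
    intro u; unfold plus_fct, mult_fct, id, fct_cte. ring. }
  destruct (Rtotal_order t a) as [Hlt | [Heq | Hgt]].
  - destruct (MVT_cor2 _ _ t a Hlt (fun c _ => D c)) as [c [Hc Hcb]].
    assert (Hs : 0 < sin c) by (apply sin_gt_0; lra).
    assert (P := phi_dec c a ltac:(lra) ltac:(lra) ltac:(lra)).
    assert (Hsa : 0 < sin a) by (apply sin_gt_0; lra).
    assert (c * cos c - k * sin c > 0).
    { rewrite <- Hk in P. unfold Rdiv in P.
      replace (c * cos c) with ((c * (cos c * / sin c)) * sin c) by (field; lra). nra. }
    nra.
  - subst; lra.
  - destruct (MVT_cor2 _ _ a t Hgt (fun c _ => D c)) as [c [Hc Hcb]].
    assert (Hs : 0 < sin c) by (apply sin_gt_0; lra).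
    assert (P := phi_dec a c ltac:(lra) ltac:(lra) ltac:(lra)).
    assert (c * cos c - k * sin c < 0).
    { rewrite <- Hk in P. unfold Rdiv in P.
      replace (c * cos c) with ((c * (cos c * / sin c)) * sin c) by (field; lra). nra. }
    nra.
Qed.

Theorem corollary4p4 (t1 t2 : R)
  (h1 : 0 < t1 < PI / 2) (h2 : 0 < t2 < PI / 2)
  (heq : t1 * (cos t1 / sin t1) = (PI - t2) * (cos t2 / sin t2)) :
  t1 / sin t1 + cos t1 > (PI - t2) / sin t2 - cos t2.
Proof.
  assert (PI2 : PI/2 < PI) by (pose proof PI_RGT_0; lra).
  set (k := t1 * (cos t1 / sin t1)).
  assert (HE := E_max t1 t2 k h1 h2 eq_refl).
  assert (HG := g_pos (PI/2 - t2) ltac:(lra) ltac:(lra)).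
  rewrite sin_shift, cos_shift in HG.
  assert (S1 : 0 < sin t1) by (apply sin_gt_0; lra).
  assert (S2 : 0 < sin t2) by (apply sin_gt_0; lra).
  assert (A1 : t1 / sin t1 = t1 * sin t1 + k * cos t1).
  { unfold k. assert (Q := sin2_cos2 t1). unfold Rsqr in Q.
    transitivity (t1 * (sin t1 * sin t1 + cos t1 * cos t1) / sin t1).
    { rewrite Q; field; lra. }
    field; lra. }
  assert (A2 : (PI - t2) / sin t2 = (PI - t2) * sin t2 + k * cos t2).
  { unfold k; rewrite heq. assert (Q := sin2_cos2 t2). unfold Rsqr in Q.
    transitivity ((PI - t2) * (sin t2 * sin t2 + cos t2 * cos t2) / sin t2).
    { rewrite Q; field; lra. }
    field; lra. }
  rewrite A1, A2. nra.
Qed.
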